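(* Let $G$ be a group and let $(\mu_i,\lambda_i)$, $i\in I\cup J$, be pairs of commuting elements of $G$ (with $I,J$ index sets). Let $j_0\in J$, let $p,q$ be relatively prime integers, and let $N$ be the normal subgroup of $G$ generated by $\mu_{j_0}^p\lambda_{j_0}^q$. Let $s_i\in\mathbb{RP}^1$ for $i\in I$ and $s_j\in\mathbb{QP}^1$ for $j\in J$ be slopes with $s_{j_0}=[p:q]$. Then the following are equivalent: (a) there is a left total preorder $\le_0$ on $G$ such that $s_i$ is weakly $\le_0$-detected with respect to $(\mu_i,\lambda_i)$ for every $i\in I$, and $s_j$ is strongly $\le_0$-detected with respect to $(\mu_j,\lambda_j)$ for every $j\in J$; (b) there is a left total preorder $\le$ on $G/N$ such that $s_i$ is weakly $\le$-detected with respect to $(\mu_iN,\lambda_iN)$ for every $i\in I$, and $s_j$ is strongly $\le$-detected with respect to $(\mu_jN,\lambda_jN)$ for every $j\in J\setminus\{j_0\}$.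
   Context: A left total preorder on a group $G$ is a binary relation $\le$ on $G$ that is reflexive, transitive, total ($x\le y$ or $y\le x$ for all $x,y$), left-invariant ($x\le y\Rightarrow gx\le gy$), and proper, i.e. not the trivial relation in which $x\le y$ for all $x,y$. Its residue group is $\{g\in G: g\le 1 \text{ and } 1\le g\}$. For commuting $\mu,\lambda\in G$, a slope $[x:y]\in\mathbb{RP}^1$ is weakly $\le$-detected with respect to $(\mu,\lambda)$ if $\mu^{p_2}\lambda^{q_2}\ge 1$ for all integers $p_1,q_1,p_2,q_2$ with $\mu^{p_1}\lambda^{q_1}\ge 1$ and $(p_1y-q_1x)(p_2y-q_2x)>0$. A slope $[p:q]\in\mathbb{QP}^1$ ($p,q$ relatively prime integers) is strongly $\le$-detected with respect to $(\mu,\lambda)$ if every conjugate of $\mu^p\lambda^q$ lies in the residue group of $\le$. *)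

(* Defs.v *)
From Stdlib Require Import ZArith Reals.

Set Implicit Arguments.

Record Group := {
  carrier :> Type;
  gmul : carrier -> carrier -> carrier;
  gone : carrier;
  ginv : carrier -> carrier;
  gmul_assoc : forall x y z, gmul x (gmul y z) = gmul (gmul x y) z;
  gmul_1l : forall x, gmul gone x = x;
  gmul_1r : forall x, gmul x gone = x;
  gmul_Vl : forall x, gmul (ginv x) x = gone;
  gmul_Vr : forall x, gmul x (ginv x) = gone
}.

Arguments gmul {g} _ _.
Arguments gone {g}.
Arguments ginv {g} _.

Definition gpow_pos {G : Group} (g : G) (n : positive) : G :=
  Pos.iter (fun h => gmul g h) gone n.

Definition gpow {G : Group} (g : G) (n : Z) : G :=
  match n with
  | Z0 => gone
  | Zpos m => gpow_pos g m
  | Zneg m => ginv (gpow_pos g m)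
  end.

Definition commute {G : Group} (x y : G) : Prop := gmul x y = gmul y x.

Definition left_total_preorder {G : Group} (le : G -> G -> Prop) : Prop :=
  (forall x, le x x) /\
  (forall x y z, le x y -> le y z -> le x z) /\
  (forall x y, le x y \/ le y x) /\
  (forall x y g, le x y -> le (gmul g x) (gmul g y)) /\
  (exists x y, ~ le x y).

Definition residue {G : Group} (le : G -> G -> Prop) (g : G) : Prop :=
  le g gone /\ le gone g.

(* Weak detection of the slope [x:y] in RP^1 (representative (x,y) <> (0,0)). *)
Definition weakly_detected {G : Group} (le : G -> G -> Prop) (mu lam : G)
    (s : R * R) : Prop :=
  let (x, y) := s in
  forall p1 q1 p2 q2 : Z,
    le gone (gmul (gpow mu p1) (gpow lam q1)) ->
    ((IZR p1 * y - IZR q1 * x) * (IZR p2 * y - IZR q2 * x) > 0)%R ->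
    le gone (gmul (gpow mu p2) (gpow lam q2)).

(* Strong detection of the slope [p:q] in QP^1 (p, q coprime integers). *)
Definition strongly_detected {G : Group} (le : G -> G -> Prop) (mu lam : G)
    (s : Z * Z) : Prop :=
  let (p, q) := s in
  forall g : G,
    residue le (gmul (gmul g (gmul (gpow mu p) (gpow lam q))) (ginv g)).

Definition subgroup {G : Group} (S : G -> Prop) : Prop :=
  S gone /\ (forall x y, S x -> S y -> S (gmul x y)) /\ (forall x, S x -> S (ginv x)).

Definition normal {G : Group} (S : G -> Prop) : Prop :=
  forall g x, S x -> S (gmul (gmul g x) (ginv g)).

Definition normal_closure {G : Group} (c : G) (g : G) : Prop :=
  forall S : G -> Prop, subgroup S -> normal S -> S c -> S g.

Definition group_hom {G H : Group} (f : G -> H) : Prop :=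
  forall x y, f (gmul x y) = gmul (f x) (f y).

Definition is_quotient_by_ncl {G H : Group} (pi : G -> H) (c : G) : Prop :=
  group_hom pi /\ (forall h : H, exists g, pi g = h) /\
  (forall g, pi g = gone <-> normal_closure c g).

(* Main.v *)
Require Import Defs.
From Stdlib Require Import ZArith Reals Classical.

Section GL.
Variable G : Group.
Implicit Types x y z a b : G.

Lemma ginv_uniq x y : gmul x y = gone -> y = ginv x.
Proof.
  intro E. rewrite <- (gmul_1l G y), <- (gmul_Vl G x), <- gmul_assoc, E, gmul_1r.
  reflexivity.
Qed.

Lemma ginv_inv x : ginv (ginv x) = x.
Proof. symmetry. apply ginv_uniq. apply gmul_Vl. Qed.

Lemma ginv_mul x y : ginv (gmul x y) = gmul (ginv y) (ginv x).
Proof.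
  symmetry. apply ginv_uniq.
  rewrite <- gmul_assoc, (gmul_assoc G y), gmul_Vr, gmul_1l, gmul_Vr. reflexivity.
Qed.

Lemma ginv_one : ginv (@gone G) = gone.
Proof. symmetry. apply ginv_uniq. apply gmul_1l. Qed.

Lemma mul_K x z : gmul x (gmul (ginv x) z) = z.
Proof. rewrite gmul_assoc, gmul_Vr, gmul_1l. reflexivity. Qed.

Lemma mul_Vk x z : gmul (ginv x) (gmul x z) = z.
Proof. rewrite gmul_assoc, gmul_Vl, gmul_1l. reflexivity. Qed.

Lemma gswap a b : gmul a b = gone -> gmul b a = gone.
Proof. intro E. apply ginv_uniq in E. subst. apply gmul_Vl. Qed.

Lemma idem_one x : gmul x x = x -> x = gone.
Proof.
  intro E. rewrite <- (mul_Vk x x), E, gmul_Vl. reflexivity.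
Qed.

Lemma gpow_opp x n : gpow x (- n) = ginv (gpow x n).
Proof.
  destruct n; simpl.
  - symmetry; apply ginv_one.
  - reflexivity.
  - symmetry; apply ginv_inv.
Qed.
End GL.

Ltac gnorm := repeat progress (rewrite ?ginv_mul, ?ginv_inv, ?ginv_one;
  rewrite <- ?gmul_assoc;
  rewrite ?mul_K, ?mul_Vk, ?gmul_1l, ?gmul_1r, ?gmul_Vr, ?gmul_Vl).

Section Hom.
Variables G H : Group.
Variable pi : G -> H.
Hypothesis hom : group_hom pi.

Lemma hom_one : pi gone = gone.
Proof. apply idem_one. rewrite <- hom, gmul_1l. reflexivity. Qed.

Lemma hom_inv x : pi (ginv x) = ginv (pi x).
Proof. apply ginv_uniq. rewrite <- hom, gmul_Vr. apply hom_one. Qed.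

Lemma hom_pow x n : pi (gpow x n) = gpow (pi x) n.
Proof.
  assert (P : forall m, pi (gpow_pos x m) = gpow_pos (pi x) m).
  { intro m. unfold gpow_pos. rewrite (Pos.iter_swap_gen _ _ pi (fun h => gmul x h)
      (fun h => gmul (pi x) h)).
    - rewrite hom_one. reflexivity.
    - intro a. apply hom. }
  destruct n; simpl.
  - apply hom_one.
  - apply P.
  - rewrite hom_inv, P. reflexivity.
Qed.
End Hom.

Section Res.
Variable G : Group.
Variable le0 : G -> G -> Prop.
Hypothesis refl : forall x, le0 x x.
Hypothesis trans : forall x y z, le0 x y -> le0 y z -> le0 x z.
Hypothesis linv : forall x y g, le0 x y -> le0 (gmul g x) (gmul g y).

Definition R0 (x : G) := le0 x gone /\ le0 gone x.

Lemma linv' x y g : le0 (gmul g x) (gmul g y) -> le0 x y.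
Proof.
  intro E. apply (linv _ _ (ginv g)) in E. rewrite !mul_Vk in E. exact E.
Qed.

Lemma R0_one : R0 gone.
Proof. split; apply refl. Qed.

Lemma R0_mul x y : R0 x -> R0 y -> R0 (gmul x y).
Proof.
  intros [a b] [c d]; split.
  - apply (trans _ x). apply (linv' _ _ (ginv x)). rewrite ?mul_Vk, ?gmul_Vl, ?gmul_1r; auto.
    exact a.
  - apply (trans _ x). exact b. apply (linv' _ _ (ginv x)). rewrite ?mul_Vk, ?gmul_Vl, ?gmul_1r; auto.
Qed.

Lemma R0_inv x : R0 x -> R0 (ginv x).
Proof.
  intros [a b]; split; apply (linv' _ _ x); rewrite gmul_Vr, gmul_1r; auto.
Qed.

Lemma R0_eq a b : R0 (gmul (ginv a) b) -> le0 a b /\ le0 b a.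
Proof.
  intros [u v]; split; apply (linv' _ _ (ginv a)); rewrite gmul_Vl; auto.
Qed.
End Res.
Arguments R0 {G} le0 x.

Theorem theorem2p3
  (G H : Group) (I J : Type)
  (muI lamI : I -> G) (muJ lamJ : J -> G)
  (hcI : forall i, commute (muI i) (lamI i))
  (hcJ : forall j, commute (muJ j) (lamJ j))
  (j0 : J) (p q : Z) (hpq : Z.gcd p q = 1%Z)
  (pi : G -> H)
  (hpi : is_quotient_by_ncl pi (gmul (gpow (muJ j0) p) (gpow (lamJ j0) q)))
  (sI : I -> R * R) (sJ : J -> Z * Z)
  (hsI : forall i, sI i <> (0%R, 0%R))
  (hsJ : forall j, Z.gcd (fst (sJ j)) (snd (sJ j)) = 1%Z)
  (hs0 : sJ j0 = (p, q) \/ sJ j0 = (- p, - q)%Z) :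
  (exists le0 : G -> G -> Prop, left_total_preorder le0 /\
     (forall i, weakly_detected le0 (muI i) (lamI i) (sI i)) /\
     (forall j, strongly_detected le0 (muJ j) (lamJ j) (sJ j)))
  <->
  (exists le : H -> H -> Prop, left_total_preorder le /\
     (forall i, weakly_detected le (pi (muI i)) (pi (lamI i)) (sI i)) /\
     (forall j, j <> j0 ->
        strongly_detected le (pi (muJ j)) (pi (lamJ j)) (sJ j))).
Proof.
  destruct hpi as [hom [surj ker]].
  set (c := gmul (gpow (muJ j0) p) (gpow (lamJ j0) q)) in *.
  split.
  - intros [le0 [[refl [trans [tot [linv [x0 [y0 nle]]]]]] [hw hst]]].
    assert (Hc : forall h, R0 le0 (gmul (gmul h c) (ginv h))).
    { intro h. pose proof (hst j0) as E. unfold strongly_detected in E.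
      destruct hs0 as [e|e]; rewrite e in E.
      - apply E.
      - specialize (E (gmul h (gpow (muJ j0) p))).
        rewrite !gpow_opp in E.
        destruct E as [u v].
        assert (R0 le0 (ginv (gmul (gmul h c) (ginv h)))) as E.
        { unfold c. revert u v. unfold R0. gnorm. intros u v. split; assumption. }
        apply R0_inv in E; auto.
        rewrite ginv_inv in E. exact E. }
    set (S := fun x => forall h, R0 le0 (gmul (gmul h x) (ginv h))).
    assert (HS : forall x, normal_closure c x -> S x).
    { intros x Hx. apply Hx.
      - split; [|split].
        + intro h. gnorm. apply R0_one; auto.
        + intros a b Ha Hb h.
          specialize (Ha h); specialize (Hb h).
          pose proof (R0_mul _ _ trans linv _ _ Ha Hb) as E.
          revert E. gnorm. auto.
        + intros a Ha h. specialize (Ha h).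
          apply R0_inv in Ha; auto. revert Ha. gnorm. auto.
      - intros g a Ha h. specialize (Ha (gmul h g)). revert Ha. gnorm. auto.
      - exact Hc. }
    assert (Hker : forall a b, pi a = pi b -> le0 a b /\ le0 b a).
    { intros a b E. apply R0_eq; auto.
      assert (S (gmul (ginv a) b)) as Hs.
      { apply HS. apply ker. rewrite hom, hom_inv, E by exact hom. apply gmul_Vl. }
      specialize (Hs gone). rewrite gmul_1l, ginv_one, gmul_1r in Hs. exact Hs. }
    set (le := fun h1 h2 => exists g1 g2, pi g1 = h1 /\ pi g2 = h2 /\ le0 g1 g2).
    assert (Hle : forall a b, le (pi a) (pi b) <-> le0 a b).
    { intros a b; split.
      - intros [g1 [g2 [e1 [e2 l]]]].
        apply (trans _ g1). apply (Hker a g1); auto.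
        apply (trans _ g2); auto. apply (Hker g2 b); auto.
      - intro l. exists a, b. auto. }
    exists le. split; [|split].
    + split; [|split; [|split; [|split]]].
      * intro h. destruct (surj h) as [g <-]. apply Hle. auto.
      * intros x y z. destruct (surj x) as [a <-]. destruct (surj y) as [b <-].
        destruct (surj z) as [d <-]. rewrite !Hle. eauto.
      * intros x y. destruct (surj x) as [a <-]. destruct (surj y) as [b <-].
        rewrite !Hle. auto.
      * intros x y g. destruct (surj x) as [a <-]. destruct (surj y) as [b <-].
        destruct (surj g) as [d <-]. rewrite <- !hom. rewrite !Hle. auto.
      * exists (pi x0), (pi y0). rewrite Hle. exact nle.
    + intro i. specialize (hw i). unfold weakly_detected in *.
      destruct (sI i) as [x y]. intros p1 q1 p2 q2 H1 H2.
      rewrite <- !(hom_pow _ _ pi hom), <- hom, <- (hom_one _ _ pi hom) in H1 |- *.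
      apply Hle. apply Hle in H1. eauto.
    + intros j _. specialize (hst j). unfold strongly_detected in *.
      destruct (sJ j) as [a b]. intro g. destruct (surj g) as [g' <-].
      unfold residue in *.
      rewrite <- !(hom_pow _ _ pi hom), <- hom, <- (hom_inv _ _ pi hom), <- !hom,
        <- (hom_one _ _ pi hom).
      destruct (hst g') as [u v]. split; apply Hle; auto.
  - intros [le [[refl [trans [tot [linv [x0 [y0 nle]]]]]] [hw hst]]].
    exists (fun a b => le (pi a) (pi b)). split; [|split].
    + split; [|split; [|split; [|split]]].
      * auto.
      * eauto.
      * auto.
      * intros x y g l. rewrite !hom. auto.
      * destruct (surj x0) as [a <-]. destruct (surj y0) as [b <-]. eauto.
    + intro i. specialize (hw i). unfold weakly_detected in *.
      destruct (sI i) as [x y]. intros p1 q1 p2 q2 H1 H2.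
      rewrite (hom_one _ _ pi hom), hom, !(hom_pow _ _ pi hom) in H1 |- *. eauto.
    + intro j. destruct (classic (j = j0)) as [e|ne].
      * subst j. unfold strongly_detected.
        assert (Hc : pi c = gone).
        { apply ker. intros S _ _ Hc. exact Hc. }
        assert (He : forall a b, sJ j0 = (a, b) ->
                  pi (gmul (gpow (muJ j0) a) (gpow (lamJ j0) b)) = gone).
        { intros a b e. destruct hs0 as [e'|e']; rewrite e' in e; injection e as <- <-.
          - exact Hc.
          - rewrite !gpow_opp, hom, !(hom_inv _ _ pi hom).
            unfold c in Hc. rewrite hom in Hc. apply gswap in Hc.
            rewrite <- ginv_mul, Hc. apply ginv_one. }
        destruct (sJ j0) as [a b] eqn:E. intro g. unfold residue; cbv beta.
        rewrite hom, hom, (He a b eq_refl), (hom_inv _ _ pi hom), (hom_one _ _ pi hom), gmul_1r,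
          gmul_Vr. split; auto.
      * specialize (hst j ne). unfold strongly_detected in *.
        destruct (sJ j) as [a b]. intro g. unfold residue in *; cbv beta.
        rewrite !hom, (hom_inv _ _ pi hom), (hom_one _ _ pi hom), !(hom_pow _ _ pi hom).
        apply hst.
Qed.
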